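(* For a real tensor $T\in\mathbb{R}^{n\times n\times n}$ of order 3, the following are equivalent: (i) $T\in\mathrm{OT}_n(\mathbb{R})$; (ii) for each of the three families of slices (the $x$-slices $X_1,\dots,X_n$, the $y$-slices $Y_1,\dots,Y_n$, and the $z$-slices $Z_1,\dots,Z_n$), denoting the family by $M_1,\dots,M_n$, the matrices $M_kM_l^T$ and $M_k^TM_l$ are symmetric for all $k,l\in\{1,\dots,n\}$.
   Context: Associate to $T$ the trilinear form $t(x,y,z)=\sum_{i,j,k}T_{ijk}x_iy_jz_k$. $\mathrm{OT}_n(K)$ is the set of tensors whose trilinear form can be written $t(x,y,z)=g(Ax,By,Cz)$ with $A,B,C\in M_n(K)$ orthogonal ($A^TA=\mathrm{Id}$ etc.) and $g(x,y,z)=\sum_{i=1}^n\alpha_ix_iy_iz_i$, $\alpha_i\in K$. Slices: $X_k=(T_{kjl})_{j,l}$ (matrix of the bilinear form $\partial t/\partial x_k$ in $(y,z)$), $Y_k=(T_{ikl})_{i,l}$ (matrix of $\partial t/\partial y_k$ in $(x,z)$), $Z_k=(T_{ijk})_{i,j}$ (matrix of $\partial t/\partial z_k$ in $(x,y)$). *)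

(* Defs.v *)
From HB Require Import structures.
From mathcomp Require Import all_boot all_order all_algebra.
Set Implicit Arguments. Unset Strict Implicit. Unset Printing Implicit Defensive.
Import Order.TTheory GRing.Theory Num.Theory.
Local Open Scope ring_scope.

Definition tensor3 (R : Type) (n : nat) := 'I_n -> 'I_n -> 'I_n -> R.

Definition trilin (R : ringType) n (T : tensor3 R n) (x y z : 'cV[R]_n) : R :=
  \sum_(i < n) \sum_(j < n) \sum_(k < n) T i j k * x i 0 * y j 0 * z k 0.

Definition diag_trilin (R : ringType) n (alpha : 'I_n -> R) (x y z : 'cV[R]_n) : R :=
  \sum_(i < n) alpha i * x i 0 * y i 0 * z i 0.

Definition orthogonal_mx (R : ringType) n (A : 'M[R]_n) : Prop := A^T *m A = 1%:M.

Definition in_OT (R : ringType) n (T : tensor3 R n) : Prop :=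
  exists (A B C : 'M[R]_n) (alpha : 'I_n -> R),
    [/\ orthogonal_mx A, orthogonal_mx B, orthogonal_mx C &
      forall x y z : 'cV[R]_n,
        trilin T x y z = diag_trilin alpha (A *m x) (B *m y) (C *m z)].

Definition xslice (R : Type) n (T : tensor3 R n) (k : 'I_n) : 'M[R]_n :=
  \matrix_(j, l) T k j l.
Definition yslice (R : Type) n (T : tensor3 R n) (k : 'I_n) : 'M[R]_n :=
  \matrix_(i, l) T i k l.
Definition zslice (R : Type) n (T : tensor3 R n) (k : 'I_n) : 'M[R]_n :=
  \matrix_(i, j) T i j k.

Definition symmetric_mx (R : Type) n (P : 'M[R]_n) : Prop := P^T = P.

Definition slice_cond (R : ringType) n (M : 'I_n -> 'M[R]_n) : Prop :=
  forall k l : 'I_n,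
    symmetric_mx (M k *m (M l)^T) /\ symmetric_mx ((M k)^T *m M l).

(* Main.v *)
Require Import Defs.
From HB Require Import structures.
From mathcomp Require Import all_boot all_order all_algebra perm.
From mathcomp Require Import complex.
From mathcomp Require Import ring.
Set Implicit Arguments. Unset Strict Implicit. Unset Printing Implicit Defensive.
Import Order.TTheory GRing.Theory Num.Theory.
Local Open Scope ring_scope.
Ltac pg := match goal with |- ?g => idtac g end.

Section Cplx.
Variable R : rcfType.
Lemma ReD (x y : R[i]) : complex.Re (x + y) = complex.Re x + complex.Re y.
Proof. case: x => a b; case: y => c d /=. by simpc. Qed.
Lemma ImD (x y : R[i]) : complex.Im (x + y) = complex.Im x + complex.Im y.
Proof. case: x => a b; case: y => c d /=. by simpc. Qed.
Lemma ReM (x y : R[i]) : complex.Re (x * y) = complex.Re x * complex.Re y - complex.Im x * complex.Im y.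
Proof. case: x => a b; case: y => c d. by simpc. Qed.
Lemma ImM (x y : R[i]) : complex.Im (x * y) = complex.Re x * complex.Im y + complex.Im x * complex.Re y.
Proof. case: x => a b; case: y => c d. by simpc. Qed.
Lemma Re0 : complex.Re (0 : R[i]) = 0. Proof. by []. Qed.
Lemma Im0 : complex.Im (0 : R[i]) = 0. Proof. by []. Qed.
Lemma Re_sum I (r : seq I) (F : I -> R[i]) : complex.Re (\sum_(i <- r) F i) = \sum_(i <- r) complex.Re (F i).
Proof. exact: (big_morph _ ReD Re0). Qed.
Lemma Im_sum I (r : seq I) (F : I -> R[i]) : complex.Im (\sum_(i <- r) F i) = \sum_(i <- r) complex.Im (F i).
Proof. exact: (big_morph _ ImD Im0). Qed.
Lemma ReMr (z : R[i]) (x : R) : complex.Re (z * x%:C%C) = complex.Re z * x.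
Proof. by rewrite ReM /= mulr0 subr0. Qed.
Lemma ImMr (z : R[i]) (x : R) : complex.Im (z * x%:C%C) = complex.Im z * x.
Proof. by rewrite ImM /= mulr0 add0r. Qed.
End Cplx.

Section Real.
Variable R : rcfType.

Definition dotr n (u v : 'rV[R]_n) := (u *m v^T) 0 0.

Lemma dotrE n (u v : 'rV[R]_n) : dotr u v = \sum_i u 0 i * v 0 i.
Proof. by rewrite /dotr !mxE; apply: eq_bigr => i _; rewrite mxE. Qed.

Lemma dotrC n (u v : 'rV[R]_n) : dotr u v = dotr v u.
Proof. by rewrite !dotrE; apply: eq_bigr => i _; rewrite mulrC. Qed.

Lemma dotr_ge0 n (u : 'rV[R]_n) : 0 <= dotr u u.
Proof. by rewrite dotrE sumr_ge0 // => i _; rewrite -expr2 sqr_ge0. Qed.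

Lemma dotr_eq0 n (u : 'rV[R]_n) : dotr u u = 0 -> u = 0.
Proof.
rewrite dotrE => /psumr_eq0P H; apply/rowP => i; rewrite mxE.
have /eqP := H (fun j _ => ltac:(by rewrite -expr2 sqr_ge0)) i isT.
by rewrite mulf_eq0 orbb => /eqP.
Qed.

Lemma dotrDl n (u v w : 'rV[R]_n) : dotr (u + v) w = dotr u w + dotr v w.
Proof. by rewrite !dotrE -big_split; apply: eq_bigr => i _; rewrite mxE mulrDl. Qed.
Lemma dotrBl n (u v w : 'rV[R]_n) : dotr (u - v) w = dotr u w - dotr v w.
Proof. by rewrite !dotrE -sumrB; apply: eq_bigr => i _; rewrite !mxE mulrBl. Qed.
Lemma dotrZl n a (u w : 'rV[R]_n) : dotr (a *: u) w = a * dotr u w.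
Proof. by rewrite !dotrE mulr_sumr; apply: eq_bigr => i _; rewrite mxE mulrA. Qed.
Lemma dotrZr n a (u w : 'rV[R]_n) : dotr w (a *: u) = a * dotr w u.
Proof. by rewrite dotrC dotrZl dotrC. Qed.

Lemma dotrDr n (u v w : 'rV[R]_n) : dotr w (u + v) = dotr w u + dotr w v.
Proof. by rewrite dotrC dotrDl !(dotrC w). Qed.

Lemma dotr_sym n (S : 'M[R]_n) (u v : 'rV[R]_n) : S^T = S ->
  dotr (u *m S) v = dotr u (v *m S).
Proof. by move=> hS; rewrite /dotr trmx_mul hS mulmxA. Qed.

Lemma eig_in n (S W : 'M[R]_n) : S^T = S -> (W *m S <= W)%MS -> W != 0 ->
  exists a (v : 'rV[R]_n), [/\ v != 0, (v <= W)%MS & v *m S = a *: v].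
Proof.
move=> hS WS W0.
set B := row_base W.
have BW : (B :=: W)%MS by exact: eq_row_base.
have BS : (B *m S <= B)%MS.
  by rewrite BW; apply: submx_trans WS; apply: submxMr; rewrite BW.
set X := B *m S *m pinvmx B.
have XB : X *m B = B *m S by rewrite /X mulmxKpV.
have Bf : row_free B by exact: row_base_free.
have r0 : (0 < \rank W)%N by rewrite lt0n mxrank_eq0.
set XC := map_mx (real_complex R) X.
have [lam ev] : exists lam, eigenvalue XC lam.
  have /closed_rootP [x hx] : size (char_poly XC) != 1%N.
    by rewrite size_char_poly; case: (\rank W) r0.
  by exists x; rewrite eigenvalue_root_char.
case/eigenvalueP: ev => c hc c0.
set a := complex.Re lam; set b := complex.Im lam.
set c1 := map_mx (@complex.Re R) c; set c2 := map_mx (@complex.Im R) c.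
have e1 : c1 *m X = a *: c1 - b *: c2.
  apply/rowP => j; have := congr1 (fun M : 'M[R[i]]_(1, \rank W) => complex.Re (M 0 j)) hc.
  rewrite !mxE Re_sum ReM => <-; apply: eq_bigr => i _; rewrite !mxE ReMr.
  done.
have e2 : c2 *m X = b *: c1 + a *: c2.
  apply/rowP => j; have := congr1 (fun M : 'M[R[i]]_(1, \rank W) => complex.Im (M 0 j)) hc.
  rewrite !mxE Im_sum ImM => H; rewrite [RHS]addrC -H.
  by apply: eq_bigr => i _; rewrite !mxE ImMr.
set p := c1 *m B; set q := c2 *m B.
have pS : p *m S = a *: p - b *: q.
  by rewrite /p -mulmxA -XB mulmxA e1 mulmxBl -!scalemxAl.
have qS : q *m S = b *: p + a *: q.
  by rewrite /q -mulmxA -XB mulmxA e2 mulmxDl -!scalemxAl.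
have hsym := dotr_sym p q hS.
rewrite pS qS dotrBl dotrDr !dotrZl !dotrZr in hsym.
have hb : b * (dotr p p + dotr q q) = 0.
  have -> : b * (dotr p p + dotr q q) = (b * dotr p p + a * dotr p q) - (a * dotr p q - b * dotr q q) by ring.
  by rewrite hsym subrr.
have pq0 : p != 0 \/ q != 0.
  rewrite /p /q !mulmx_free_eq0 //.
  case: (eqVneq c1 0) => h1; last by left.
  case: (eqVneq c2 0) => h2; last by right.
  exfalso; move/negP: c0; apply; apply/eqP/rowP => j.
  move/rowP: h1 => /(_ j); move/rowP: h2 => /(_ j); rewrite !mxE.
  by case: (c 0 j) => x y /= -> ->.
have spos : 0 < dotr p p + dotr q q.
  case: pq0 => [hp|hq].
    apply: ltr_wpDr; first exact: dotr_ge0.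
    by rewrite lt0r dotr_ge0 andbT; apply/eqP => /dotr_eq0 /eqP; apply/negP.
  apply: ltr_wpDl; first exact: dotr_ge0.
  by rewrite lt0r dotr_ge0 andbT; apply/eqP => /dotr_eq0 /eqP; apply/negP.
have b0 : b = 0.
  by move/eqP: hb; rewrite mulf_eq0 (gt_eqF spos) orbF => /eqP.
rewrite b0 scale0r subr0 in pS; rewrite b0 scale0r add0r in qS.
exists a; case: pq0 => [hp|hq].
  by exists p; split => //; rewrite /p -BW submxMl.
by exists q; split => //; rewrite /q -BW submxMl.
Qed.


Lemma common_eig n (Ss : seq 'M[R]_n) : forall W : 'M[R]_n,
  {in Ss, forall S, S^T = S} -> {in Ss &, forall S S', S *m S' = S' *m S} ->
  {in Ss, forall S, (W *m S <= W)%MS} -> W != 0 ->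
  exists2 v : 'rV[R]_n, v != 0 &
    (v <= W)%MS /\ {in Ss, forall S, exists a, v *m S = a *: v}.
Proof.
elim: Ss => [|S Ss IH] W hsym hcomm hstab W0.
  case: (pickP (fun i => row i W != 0)) => [i hi|h].
    by exists (row i W) => //; split; [exact: row_sub | move=> S].
  exfalso; move/negP: W0; apply; apply/eqP/row_matrixP => i.
  by move: (h i) => /negbFE/eqP ->; rewrite row0.
have hS : S^T = S by apply: hsym; rewrite mem_head.
have [a [v0 [v00 v0W v0S]]] := eig_in hS (hstab S (mem_head _ _)) W0.
set W' := (W :&: kermx (S - a%:M))%MS.
have W'W : (W' <= W)%MS := capmxSl _ _.
have W'K : W' *m (S - a%:M) = 0 by apply/eqP; rewrite -sub_kermx capmxSr.
have W'0 : W' != 0.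
  apply/eqP => h; move/negP: v00; apply.
  have : (v0 <= W')%MS.
    by rewrite sub_capmx v0W sub_kermx mulmxBr v0S mul_mx_scalar subrr eqxx.
  by rewrite h submx0.
have [v v0' [vW' vE]] : exists2 v : 'rV[R]_n, v != 0 &
    (v <= W')%MS /\ {in Ss, forall S, exists a, v *m S = a *: v}.
  apply: IH => //.
  - by move=> S' hS'; apply: hsym; rewrite in_cons hS' orbT.
  - by move=> S1 S2 h1 h2; apply: hcomm; rewrite in_cons ?h1 ?h2 orbT.
  move=> S' hS'.
  have cS' : S' *m (S - a%:M) = (S - a%:M) *m S'.
    rewrite mulmxBr mulmxBl scalar_mxC; congr (_ - _).
    by apply: hcomm; rewrite in_cons ?hS' ?eqxx ?orbT.
  rewrite sub_capmx; apply/andP; split.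
    by apply: submx_trans (hstab S' _); [apply: submxMr | rewrite in_cons hS' orbT].
  by rewrite sub_kermx -mulmxA cS' mulmxA W'K mul0mx.
exists v => //; split; first exact: submx_trans vW' W'W.
move=> S'; rewrite in_cons => /orP [/eqP ->|hS']; last exact: vE.
exists a; have : (v <= kermx (S - a%:M))%MS by apply: submx_trans vW' (capmxSr _ _).
by rewrite sub_kermx mulmxBr mul_mx_scalar subr_eq0 => /eqP.
Qed.


Definition isdiag n (A : 'M[R]_n) := forall i j, i != j -> A i j = 0.

Lemma build n (Ss : seq 'M[R]_n) :
  {in Ss, forall S, S^T = S} -> {in Ss &, forall S S', S *m S' = S' *m S} ->
  forall k, (k <= n)%N -> exists M : 'M[R]_(k, n), (M *m M^T = 1%:M) /\
    {in Ss, forall S, exists d : 'rV_k, M *m S = diag_mx d *m M}.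
Proof.
move=> hsym hcomm; elim => [|k IH] hk.
  exists 0; split; first by rewrite [LHS]flatmx0 [RHS]flatmx0.
  by move=> S _; exists 0; rewrite [LHS]flatmx0 [RHS]flatmx0.
have [M [hM hD]] := IH (ltnW hk).
set W := kermx M^T.
have WM : W *m M^T = 0 by apply/eqP; rewrite -sub_kermx submx_refl.
have Wst : {in Ss, forall S, (W *m S <= W)%MS}.
  move=> S hS; have [d hd] := hD S hS.
  rewrite sub_kermx -mulmxA -[X in X *m M^T](hsym S hS).
  by rewrite -trmx_mul hd trmx_mul mulmxA WM mul0mx.
have W0 : W != 0.
  rewrite -mxrank_eq0 mxrank_ker -lt0n subn_gt0.
  by apply: leq_ltn_trans (rank_leq_col _) hk.
have [v v0 [vW vE]] := common_eig hsym hcomm Wst W0.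
have vM : v *m M^T = 0 by apply/eqP; rewrite -sub_kermx.
have dpos : 0 < dotr v v.
  by rewrite lt0r dotr_ge0 andbT; apply/eqP => /dotr_eq0 /eqP; apply/negP.
set s := Num.sqrt (dotr v v).
have s0 : s != 0 by rewrite sqrtr_eq0 -ltNge.
set w := s^-1 *: v.
have wM : w *m M^T = 0 by rewrite /w -scalemxAl vM scaler0.
have Mw : M *m w^T = 0 by rewrite -(trmxK (M *m w^T)) trmx_mul trmxK wM trmx0.
have ww : w *m w^T = 1%:M.
  apply/matrixP => i j; rewrite !ord1 [RHS]mxE eqxx /=.
  rewrite -/(dotr w w) /w dotrZl dotrZr mulrA -invfM -expr2 sqr_sqrtr.
    by rewrite mulVf // gt_eqF.
  exact: dotr_ge0.
have h1 : col_mx w M *m (col_mx w M)^T = 1%:M.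
  rewrite tr_col_mx mul_col_mx !mul_mx_row ww wM Mw hM -block_mxEv.
  by rewrite -scalar_mx_block.
have h2 : {in Ss, forall S, exists d : 'rV_(1 + k),
    col_mx w M *m S = diag_mx d *m col_mx w M}.
  move=> S hS; have [d hd] := hD S hS; have [a ha] := vE S hS.
  exists (row_mx (const_mx a) d).
  rewrite diag_mx_row mul_block_col !mul0mx addr0 add0r mul_col_mx -hd.
  congr col_mx.
  have -> : diag_mx (const_mx a : 'rV_1) = a%:M.
    by apply/matrixP => i j; rewrite !ord1 !mxE eqxx.
  by rewrite mul_scalar_mx /w -scalemxAl ha scalerA mulrC -scalerA.
by exists (col_mx w M).
Qed.

Lemma Kdiag n (Ss : seq 'M[R]_n) :
  {in Ss, forall S, S^T = S} -> {in Ss &, forall S S', S *m S' = S' *m S} ->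
  exists V : 'M[R]_n, [/\ V^T *m V = 1%:M, V *m V^T = 1%:M &
    {in Ss, forall S, isdiag (V *m S *m V^T)}].
Proof.
move=> hsym hcomm; have [M [hM hD]] := build hsym hcomm (leqnn n).
exists M; split => //; first exact: mulmx1C.
move=> S hS i j hij; have [d hd] := hD S hS.
by rewrite hd -mulmxA hM mulmx1 mxE (negbTE hij) mulr0n.
Qed.

End Real.

Section Gen.
Variable R : rcfType.
Variable n : nat.
Implicit Types (M N : 'I_n -> 'M[R]_n) (Q P : 'M[R]_n).

Lemma isdiag_sum I (r : seq I) (F : I -> 'M[R]_n) :
  (forall i, isdiag (F i)) -> isdiag (\sum_(i <- r) F i).
Proof. by move=> h a b hab; rewrite summxE big1 // => i _; exact: h. Qed.

Lemma isdiag_scale c (A : 'M[R]_n) : isdiag A -> isdiag (c *: A).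
Proof. by move=> h a b hab; rewrite mxE h // mulr0. Qed.

Lemma conj_sum I (r : seq I) (F : I -> 'M[R]_n) Q P :
  Q *m (\sum_(i <- r) F i) *m P = \sum_(i <- r) Q *m F i *m P.
Proof. by rewrite mulmx_sumr mulmx_suml. Qed.

Lemma conj_scale c (X : 'M[R]_n) Q P : Q *m (c *: X) *m P = c *: (Q *m X *m P).
Proof. by rewrite -scalemxAr -scalemxAl. Qed.

Lemma lin_mx Q P (a : 'I_n -> R) M :
  Q *m (\sum_i a i *: M i) *m P = \sum_i a i *: (Q *m M i *m P).
Proof. by rewrite conj_sum; apply: eq_bigr => i _; rewrite conj_scale. Qed.

Lemma prod_sums (a b : 'I_n -> R) M N :
  (\sum_i a i *: M i) *m (\sum_j b j *: N j) =
  \sum_i \sum_j (a i * b j) *: (M i *m N j).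
Proof.
rewrite mulmx_suml; apply: eq_bigr => i _; rewrite mulmx_sumr.
by apply: eq_bigr => j _; rewrite -scalemxAl -scalemxAr scalerA.
Qed.

Lemma tr_sum (a : 'I_n -> R) M :
  (\sum_i a i *: M i)^T = \sum_i a i *: (M i)^T.
Proof.
by apply/matrixP => x y; rewrite !mxE !summxE; apply: eq_bigr => i _; rewrite !mxE.
Qed.

Lemma tr_sum2 (c : 'I_n -> 'I_n -> R) (F : 'I_n -> 'I_n -> 'M[R]_n) :
  (\sum_i \sum_j c i j *: F i j)^T = \sum_i \sum_j c i j *: (F i j)^T.
Proof.
apply/matrixP => x y; rewrite !mxE !summxE; apply: eq_bigr => i _.
by rewrite !summxE; apply: eq_bigr => j _; rewrite !mxE.
Qed.

Definition PD M := forall i j, isdiag (M i *m (M j)^T).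
Definition PDt M := forall i j, isdiag ((M i)^T *m M j).

Lemma PD_gen M M' Q P (a : 'I_n -> 'I_n -> R) :
  (forall k, M' k = Q *m (\sum_i a k i *: M i) *m P) -> P *m P^T = 1%:M ->
  (forall i j, isdiag (Q *m (M i *m (M j)^T) *m Q^T)) -> PD M'.
Proof.
move=> hM hP hD k l.
have -> : M' k *m (M' l)^T =
    Q *m ((\sum_i a k i *: M i) *m (\sum_i a l i *: (M i)^T)) *m Q^T.
  rewrite !hM !trmx_mul tr_sum !mulmxA.
  by rewrite -(mulmxA (Q *m \sum_i a k i *: M i) P) hP mulmx1.
rewrite prod_sums conj_sum; apply: isdiag_sum => i.
rewrite conj_sum; apply: isdiag_sum => j.
by rewrite conj_scale; apply: isdiag_scale.
Qed.

Lemma PDt_gen M M' Q P (a : 'I_n -> 'I_n -> R) :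
  (forall k, M' k = Q *m (\sum_i a k i *: M i) *m P) -> Q^T *m Q = 1%:M ->
  (forall i j, isdiag (P^T *m ((M i)^T *m M j) *m P)) -> PDt M'.
Proof.
move=> hM hQ hD k l.
have -> : (M' k)^T *m M' l =
    P^T *m ((\sum_i a k i *: (M i)^T) *m (\sum_i a l i *: M i)) *m P.
  rewrite !hM !trmx_mul tr_sum !mulmxA.
  by rewrite -(mulmxA (P^T *m (\sum_i a k i *: (M i)^T)) Q^T) hQ mulmx1.
rewrite prod_sums conj_sum; apply: isdiag_sum => i.
rewrite conj_sum; apply: isdiag_sum => j.
by rewrite conj_scale; apply: isdiag_scale.
Qed.

Lemma SC_lin M M' (a : 'I_n -> 'I_n -> R) :
  (forall k, M' k = \sum_i a k i *: M i) -> slice_cond M -> slice_cond M'.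
Proof.
move=> hM hS k l; rewrite !hM /symmetric_mx; split.
  by rewrite tr_sum prod_sums tr_sum2; do 2 (apply: eq_bigr => ? _);
    rewrite (proj1 (hS _ _)).
by rewrite tr_sum prod_sums tr_sum2; do 2 (apply: eq_bigr => ? _);
  rewrite (proj2 (hS _ _)).
Qed.

Lemma conj_tr Q P (X : 'M[R]_n) : (Q *m X *m P)^T = P^T *m X^T *m Q^T.
Proof. by rewrite !trmx_mul mulmxA. Qed.

Lemma SC_mull M M' Q :
  (forall k, M' k = Q *m M k) -> Q^T *m Q = 1%:M -> slice_cond M -> slice_cond M'.
Proof.
move=> hM hQ hS k l; rewrite !hM /symmetric_mx; split.
  have e : Q *m M k *m (Q *m M l)^T = Q *m (M k *m (M l)^T) *m Q^T.
    by rewrite trmx_mul !mulmxA.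
  by rewrite e conj_tr trmxK (proj1 (hS k l)).
have e : (Q *m M k)^T *m (Q *m M l) = (M k)^T *m M l.
  by rewrite trmx_mul -!mulmxA (mulmxA Q^T Q) hQ mul1mx.
by rewrite e; exact: (proj2 (hS k l)).
Qed.

Lemma SC_mulr M M' P :
  (forall k, M' k = M k *m P) -> P *m P^T = 1%:M -> slice_cond M -> slice_cond M'.
Proof.
move=> hM hP hS k l; rewrite !hM /symmetric_mx; split.
  have e : M k *m P *m (M l *m P)^T = M k *m (M l)^T.
    by rewrite trmx_mul -!mulmxA (mulmxA P P^T) hP mul1mx.
  by rewrite e; exact: (proj1 (hS k l)).
have e : (M k *m P)^T *m (M l *m P) = P^T *m ((M k)^T *m M l) *m P.
  by rewrite trmx_mul !mulmxA.
by rewrite e conj_tr trmxK (proj2 (hS k l)).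
Qed.

Lemma SC_diag M (d : 'I_n -> 'rV[R]_n) :
  (forall k, M k = diag_mx (d k)) -> slice_cond M.
Proof.
move=> hM k l; rewrite !hM /symmetric_mx !tr_diag_mx !mulmx_diag tr_diag_mx.
by split; congr diag_mx; apply/rowP => i; rewrite !mxE mulrC.
Qed.

Lemma SC_tr M : slice_cond M -> slice_cond (fun k => (M k)^T).
Proof. by move=> hS k l; rewrite !trmxK; split; [exact: (proj2 (hS k l))|exact: (proj1 (hS k l))]. Qed.

End Gen.

Section Tens.
Variable R : rcfType.
Variable n : nat.
Implicit Types (M : 'I_n -> 'M[R]_n) (T : tensor3 R n).

Lemma SC_comm M : slice_cond M -> forall i j k l,
  (M i *m (M j)^T) *m (M k *m (M l)^T) = (M k *m (M l)^T) *m (M i *m (M j)^T).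
Proof.
move=> hS i j k l.
have sa a b : M a *m (M b)^T = M b *m (M a)^T.
  by rewrite -(proj1 (hS a b)) trmx_mul trmxK.
have sb a b : (M a)^T *m M b = (M b)^T *m M a.
  by rewrite -(proj2 (hS a b)) trmx_mul trmxK.
rewrite !mulmxA -(mulmxA (M i)) (sb j k) mulmxA (sa i k).
rewrite -!mulmxA (sa j l) !mulmxA.
rewrite -(mulmxA (M k) (M i)^T) (sb i l) !mulmxA.
done.
Qed.

Lemma K_fam M : slice_cond M -> exists V : 'M[R]_n,
  [/\ V^T *m V = 1%:M, V *m V^T = 1%:M &
      forall i j, isdiag (V *m (M i *m (M j)^T) *m V^T)].
Proof.
move=> hS.
set Ss := [seq M ij.1 *m (M ij.2)^T | ij <- enum {: 'I_n * 'I_n}].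
have [V [h1 h2 h3]] : exists V : 'M[R]_n, [/\ V^T *m V = 1%:M, V *m V^T = 1%:M &
    {in Ss, forall S, isdiag (V *m S *m V^T)}].
  apply: Kdiag.
    by move=> S /mapP [ij _ ->]; exact: (proj1 (hS _ _)).
  move=> S S' /mapP [ij _ ->] /mapP [ij' _ ->]; exact: SC_comm.
exists V; split => // i j; apply: h3; apply/mapP; exists (i, j) => //.
by rewrite mem_enum.
Qed.

Definition rotx (A : 'M[R]_n) T : tensor3 R n := fun r j k => \sum_i A r i * T i j k.
Definition roty (A : 'M[R]_n) T : tensor3 R n := fun i p k => \sum_j A p j * T i j k.
Definition rotz (A : 'M[R]_n) T : tensor3 R n := fun i j q => \sum_k A q k * T i j k.

Lemma xs_rotx A T r : xslice (rotx A T) r = \sum_i A r i *: xslice T i.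
Proof. by apply/matrixP => a b; rewrite !mxE summxE; apply: eq_bigr => i _; rewrite !mxE. Qed.
Lemma xs_roty A T r : xslice (roty A T) r = A *m xslice T r.
Proof. by apply/matrixP => a b; rewrite !mxE; apply: eq_bigr => i _; rewrite !mxE. Qed.
Lemma xs_rotz A T r : xslice (rotz A T) r = xslice T r *m A^T.
Proof. by apply/matrixP => a b; rewrite !mxE; apply: eq_bigr => i _; rewrite !mxE mulrC. Qed.
Lemma ys_rotx A T r : yslice (rotx A T) r = A *m yslice T r.
Proof. by apply/matrixP => a b; rewrite !mxE; apply: eq_bigr => i _; rewrite !mxE. Qed.
Lemma ys_roty A T r : yslice (roty A T) r = \sum_i A r i *: yslice T i.
Proof. by apply/matrixP => a b; rewrite !mxE summxE; apply: eq_bigr => i _; rewrite !mxE. Qed.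
Lemma ys_rotz A T r : yslice (rotz A T) r = yslice T r *m A^T.
Proof. by apply/matrixP => a b; rewrite !mxE; apply: eq_bigr => i _; rewrite !mxE mulrC. Qed.
Lemma zs_rotx A T r : zslice (rotx A T) r = A *m zslice T r.
Proof. by apply/matrixP => a b; rewrite !mxE; apply: eq_bigr => i _; rewrite !mxE. Qed.
Lemma zs_roty A T r : zslice (roty A T) r = zslice T r *m A^T.
Proof. by apply/matrixP => a b; rewrite !mxE; apply: eq_bigr => i _; rewrite !mxE mulrC. Qed.
Lemma zs_rotz A T r : zslice (rotz A T) r = \sum_i A r i *: zslice T i.
Proof. by apply/matrixP => a b; rewrite !mxE summxE; apply: eq_bigr => i _; rewrite !mxE. Qed.

Lemma sum_delta (a : 'I_n) (F : 'I_n -> R) : \sum_p (p == a)%:R * F p = F a.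
Proof.
rewrite (bigD1 a) //= eqxx mul1r big1 ?addr0 // => p /negbTE ->.
by rewrite mul0r.
Qed.

Lemma sum_delta_r (a : 'I_n) (F : 'I_n -> R) : \sum_p F p * (p == a)%:R = F a.
Proof. by rewrite -[RHS]sum_delta; apply: eq_bigr => p _; rewrite mulrC. Qed.

Lemma orth_sum (A : 'M[R]_n) i i' : A^T *m A = 1%:M ->
  \sum_r A r i * A r i' = (i == i')%:R.
Proof.
move=> hA; have := congr1 (fun X : 'M[R]_n => X i i') hA; rewrite !mxE => <-.
by apply: eq_bigr => r _; rewrite mxE.
Qed.

Lemma rotx_inv A T i j k : A^T *m A = 1%:M ->
  \sum_r A r i * rotx A T r j k = T i j k.
Proof.
move=> hA; rewrite /rotx.
under eq_bigr do rewrite mulr_sumr.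
rewrite exchange_big /= -[RHS](sum_delta i (fun p => T p j k)).
apply: eq_bigr => i' _; rewrite -(orth_sum i' i hA) mulr_suml.
by apply: eq_bigr => r _; ring.
Qed.
Lemma roty_inv A T i j k : A^T *m A = 1%:M ->
  \sum_r A r j * roty A T i r k = T i j k.
Proof.
move=> hA; rewrite /roty.
under eq_bigr do rewrite mulr_sumr.
rewrite exchange_big /= -[RHS](sum_delta j (fun p => T i p k)).
apply: eq_bigr => i' _; rewrite -(orth_sum i' j hA) mulr_suml.
by apply: eq_bigr => r _; ring.
Qed.
Lemma rotz_inv A T i j k : A^T *m A = 1%:M ->
  \sum_r A r k * rotz A T i j r = T i j k.
Proof.
move=> hA; rewrite /rotz.
under eq_bigr do rewrite mulr_sumr.
rewrite exchange_big /= -[RHS](sum_delta k (fun p => T i j p)).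
apply: eq_bigr => i' _; rewrite -(orth_sum i' k hA) mulr_suml.
by apply: eq_bigr => r _; ring.
Qed.

End Tens.

Section Tri.
Variable R : rcfType.
Variable n : nat.
Implicit Types (T : tensor3 R n).

Lemma sum4_perm (F : 'I_n -> 'I_n -> 'I_n -> 'I_n -> R) :
  \sum_i \sum_j \sum_k \sum_r F i j k r = \sum_r \sum_i \sum_j \sum_k F i j k r.
Proof.
under eq_bigr => i _ do under eq_bigr => j _ do rewrite exchange_big.
under eq_bigr => i _ do rewrite exchange_big.
by rewrite exchange_big.
Qed.

Lemma sum3 (a b c : 'I_n -> R) t :
  t * (\sum_i a i) * (\sum_j b j) * (\sum_l c l) =
  \sum_i \sum_j \sum_l t * a i * b j * c l.
Proof.
rewrite [t * _]mulr_sumr mulr_suml mulr_suml; apply: eq_bigr => i _.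
rewrite [t * a i * _]mulr_sumr mulr_suml; apply: eq_bigr => j _.
by rewrite mulr_sumr.
Qed.

Lemma tri_formula T (al : 'I_n -> R) (A B C : 'M[R]_n) :
  (forall i j k, T i j k = \sum_r al r * A r i * B r j * C r k) ->
  forall x y z, trilin T x y z = diag_trilin al (A *m x) (B *m y) (C *m z).
Proof.
move=> hT x y z; rewrite /trilin /diag_trilin.
transitivity (\sum_i \sum_j \sum_k \sum_r
   al r * A r i * B r j * C r k * x i 0 * y j 0 * z k 0).
  apply: eq_bigr => i _; apply: eq_bigr => j _; apply: eq_bigr => k _.
  by rewrite hT !mulr_suml.
rewrite sum4_perm; apply: eq_bigr => r _; rewrite !mxE sum3.
apply: eq_bigr => i _; apply: eq_bigr => j _; apply: eq_bigr => k _.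
by ring.
Qed.

Lemma delta_sum (a : 'I_n) (F : 'I_n -> R) :
  \sum_p F p * (delta_mx a 0 : 'cV[R]_n) p 0 = F a.
Proof.
rewrite -[RHS](sum_delta_r a F); apply: eq_bigr => p _.
by rewrite mxE andbT.
Qed.

Lemma tri_delta T i j k :
  trilin T (delta_mx i 0) (delta_mx j 0) (delta_mx k 0) = T i j k.
Proof.
rewrite /trilin.
transitivity (\sum_i' T i' j k * (delta_mx i 0 : 'cV[R]_n) i' 0); last by rewrite delta_sum.
apply: eq_bigr => i' _.
transitivity (\sum_j' (T i' j' k * (delta_mx i 0 : 'cV[R]_n) i' 0) * (delta_mx j 0 : 'cV[R]_n) j' 0).
  apply: eq_bigr => j' _.
  by rewrite (delta_sum k (fun k' => T i' j' k' * (delta_mx i 0 : 'cV[R]_n) i' 0 * (delta_mx j 0 : 'cV[R]_n) j' 0)).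
by rewrite delta_sum.
Qed.

Lemma mul_delta (A : 'M[R]_n) i r : (A *m (delta_mx i 0 : 'cV[R]_n)) r 0 = A r i.
Proof. by rewrite mxE delta_sum. Qed.

Lemma SC_decomp (M : 'I_n -> 'M[R]_n) (d : 'I_n -> 'I_n -> R) (P Q : 'M[R]_n) :
  P^T *m P = 1%:M -> Q^T *m Q = 1%:M ->
  (forall k a b, M k a b = \sum_r d k r * P r a * Q r b) -> slice_cond M.
Proof.
move=> hP hQ hM.
apply: (@SC_mulr _ _ (fun k => P^T *m diag_mx (\row_r d k r)) _ Q).
- move=> k; apply/matrixP => a b; rewrite hM mxE; apply: eq_bigr => r _.
  by rewrite mul_mx_diag !mxE; ring.
- exact: mulmx1C hQ.
apply: (@SC_mull _ _ (fun k => diag_mx (\row_r d k r)) _ P^T) => //.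
  by rewrite trmxK; apply: mulmx1C.
exact: (@SC_diag _ _ _ (fun k => \row_r d k r)).
Qed.

End Tri.

Lemma perm_ext n (S : {set 'I_n}) (f : 'I_n -> 'I_n) :
  {in S &, injective f} -> exists s : {perm 'I_n}, {in S, forall x, s x = f x}.
Proof.
move=> hf.
set A := enum (~: S); set B := enum (~: (f @: S)).
have sz : size A = size B.
  by rewrite /A /B -!cardE (cardsCs (~: S)) (cardsCs (~: (f @: S))) !setCK card_in_imset.
pose g x := if x \in S then f x else nth x B (index x A).
have gi : injective g.
  have hB x : x \notin S -> nth x B (index x A) \in ~: (f @: S).
    move=> hx; rewrite -(mem_enum (mem (~: (f @: S)))) -/B mem_nth //.
    by rewrite -sz index_mem /A mem_enum inE hx.
  have hfS x : x \in S -> f x \in f @: S by move=> hx; apply: imset_f.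
  move=> x y; rewrite /g.
  case: (boolP (x \in S)) => hx; case: (boolP (y \in S)) => hy.
  - by apply: hf.
  - by move=> e; have := hB y hy; rewrite -e inE hfS.
  - by move=> e; have := hB x hx; rewrite e inE hfS.
  move=> e.
  have hxA : x \in A by rewrite /A mem_enum inE.
  have hyA : y \in A by rewrite /A mem_enum inE.
  have ie : index x A = index y A.
    apply/eqP; move: e => /eqP; rewrite (set_nth_default x) ?(nth_uniq x) //.
    - by rewrite -sz index_mem.
    - by rewrite -sz index_mem.
    - by rewrite /B enum_uniq.
    by rewrite -sz index_mem.
  by rewrite -(nth_index x hxA) ie nth_index.
exists (perm gi) => x hx; by rewrite permE /g hx.
Qed.

Section Struct.
Variable R : rcfType.
Variable n : nat.

Lemma swap_sum (c : 'I_n -> R) (a : 'I_n -> 'I_n -> R) (b : 'I_n -> R) :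
  \sum_j c j * (\sum_i a i j * b i) = \sum_i (\sum_j c j * a i j) * b i.
Proof.
under eq_bigr do rewrite mulr_sumr.
rewrite exchange_big; apply: eq_bigr => i _; rewrite mulr_suml.
by apply: eq_bigr => j _; rewrite mulrA.
Qed.

Lemma sq_ne0 (F : 'I_n -> R) a : F a != 0 -> \sum_j F j * F j != 0.
Proof.
move=> ha; apply/eqP => /psumr_eq0P h.
have := h (fun j _ => ltac:(by rewrite -expr2 sqr_ge0)) a isT.
by move/eqP; rewrite mulf_eq0 orbb (negbTE ha).
Qed.

Lemma struct (U : tensor3 R n) :
  PD (xslice U) -> PDt (xslice U) -> PD (zslice U) ->
  slice_cond (yslice U) -> slice_cond (zslice U) ->
  exists (s t : {perm 'I_n}) (al : 'I_n -> R),
    forall r p q, U r p q = (p == s r)%:R * (q == t r)%:R * al r.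
Proof.
move=> hX hXt hZ hY hZs.
have F1 r s k l : r != s -> \sum_j U r j k * U s j l = 0.
  move=> h; rewrite -[RHS](hZ k l r s h) mxE.
  by apply: eq_bigr => j _; rewrite !mxE.
have F2 k l p p' : p != p' -> \sum_q U k p q * U l p' q = 0.
  move=> h; rewrite -[RHS](hX k l p p' h) mxE.
  by apply: eq_bigr => j _; rewrite !mxE.
have F3 k l q q' : q != q' -> \sum_p U k p q * U l p q' = 0.
  move=> h; rewrite -[RHS](hXt k l q q' h) mxE.
  by apply: eq_bigr => j _; rewrite !mxE.
have F4 j m l l' : \sum_i U i j l * U i m l' = \sum_i U i j l' * U i m l.
  have := congr1 (fun X : 'M[R]_n => X l l') (proj2 (hY j m)).
  have e1 a b : \sum_i U i j a * U i m b = \sum_i (yslice U j)^T a i * yslice U m i b.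
    by apply: eq_bigr => i _; rewrite !mxE.
  by rewrite !mxE !e1 => ->.
have F5 k l j j' : \sum_i U i j k * U i j' l = \sum_i U i j' k * U i j l.
  have := congr1 (fun X : 'M[R]_n => X j j') (proj2 (hZs k l)).
  have e1 a b : \sum_i U i a k * U i b l = \sum_i (zslice U k)^T a i * zslice U l i b.
    by apply: eq_bigr => i _; rewrite !mxE.
  rewrite !mxE -!e1 => ->.
  by apply: eq_bigr => i _; rewrite mulrC.
have D1 r s p p' : r != s -> \sum_q U r p q * U s p' q = 0.
  move=> hrs; case: (eqVneq p p') => [<-|hp]; last exact: F2.
  set P := xslice U r *m (xslice U s)^T.
  have hPP : P *m P = 0.
    have h0 : (xslice U s)^T *m xslice U r = 0.
      apply/matrixP => q q'; rewrite !mxE -[RHS](F1 s r q q'); last by rewrite eq_sym.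
      by apply: eq_bigr => j _; rewrite !mxE.
    by rewrite /P mulmxA -(mulmxA (xslice U r)) h0 mulmx0 mul0mx.
  have : P p p * P p p = 0.
    rewrite -[RHS](_ : (P *m P) p p = 0); last by rewrite hPP mxE.
    rewrite [RHS]mxE (bigD1 p) //= big1 ?addr0 // => j hj.
    by rewrite /P (hX r s p j) ?mul0r // eq_sym.
  move/eqP; rewrite mulf_eq0 orbb /P mxE => /eqP h; rewrite -[RHS]h.
  by apply: eq_bigr => q _; rewrite !mxE.
have E1 s l l' m : l != l' -> (\sum_j U s j l * U s j l) * U s m l' = 0.
  move=> hl.
  have e : \sum_j U s j l * (\sum_i U i j l * U i m l') =
           \sum_j U s j l * (\sum_i U i j l' * U i m l).
    by apply: eq_bigr => j _; rewrite F4.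
  rewrite !swap_sum in e.
  have L : \sum_i (\sum_j U s j l * U i j l) * U i m l' =
           (\sum_j U s j l * U s j l) * U s m l'.
    rewrite (bigD1 s) //= [X in _ + X]big1 ?addr0 // => i hi.
    by rewrite F1 ?mul0r // eq_sym.
  rewrite -L e; apply: big1 => i _.
  case: (eqVneq i s) => [->|hi]; first by rewrite F3 ?mul0r.
  by rewrite F1 ?mul0r // eq_sym.
have E2 s j j' l : j != j' -> (\sum_k U s j k * U s j k) * U s j' l = 0.
  move=> hj.
  have e : \sum_k U s j k * (\sum_i U i j k * U i j' l) =
           \sum_k U s j k * (\sum_i U i j' k * U i j l).
    by apply: eq_bigr => k _; rewrite F5.
  rewrite !swap_sum in e.
  have L : \sum_i (\sum_k U s j k * U i j k) * U i j' l =
           (\sum_k U s j k * U s j k) * U s j' l.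
    rewrite (bigD1 s) //= [X in _ + X]big1 ?addr0 // => i hi.
    by rewrite D1 ?mul0r // eq_sym.
  rewrite -L e; apply: big1 => i _.
  case: (eqVneq i s) => [->|hi]; first by rewrite F2 ?mul0r.
  by rewrite D1 ?mul0r // eq_sym.
have single s p q p' q' : U s p q != 0 -> U s p' q' != 0 -> p = p' /\ q = q'.
  move=> h1 h2; split.
    case: (eqVneq p p') => // hp; exfalso.
    have := E2 s p p' q' hp; move/eqP; rewrite mulf_eq0 (negbTE h2) orbF.
    by rewrite (negbTE (@sq_ne0 (fun k => U s p k) q h1)).
  case: (eqVneq q q') => // hq; exfalso.
  have := E1 s q q' p' hq; move/eqP; rewrite mulf_eq0 (negbTE h2) orbF.
  by rewrite (negbTE (@sq_ne0 (fun j => U s j q) p h1)).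
have dist r s p q p' q' : r != s -> U r p q != 0 -> U s p' q' != 0 -> p != p' /\ q != q'.
  move=> hrs h1 h2; split.
    apply/eqP => hp; subst p'.
    have := F1 r s q q' hrs; rewrite (bigD1 p) //= big1 ?addr0; last first.
      move=> j hj; case: (eqVneq (U r j q) 0) => [->|hj0]; first by rewrite mul0r.
      by have [] := single r p q j q h1 hj0 => e _; rewrite e eqxx in hj.
    by move/eqP; rewrite mulf_eq0 (negbTE h1) (negbTE h2).
  apply/eqP => hq; subst q'.
  have := D1 r s p p' hrs; rewrite (bigD1 q) //= big1 ?addr0; last first.
    move=> j hj; case: (eqVneq (U r p j) 0) => [->|hj0]; first by rewrite mul0r.
    by have [] := single r p q p j h1 hj0 => _ e; rewrite e eqxx in hj.
  by move/eqP; rewrite mulf_eq0 (negbTE h1) (negbTE h2).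
pose pk r := [pick pq : 'I_n * 'I_n | U r pq.1 pq.2 != 0].
pose f r := if pk r is Some pq then pq.1 else r.
pose g r := if pk r is Some pq then pq.2 else r.
pose S := [set r | pk r != None].
have fi : {in S &, injective f}.
  move=> r s; rewrite !inE /f /pk.
  case: pickP => [[p q] /= hr _|//]; case: pickP => [[p' q'] /= hs _ e|//].
  apply/eqP; apply: contraT => hrs.
  by have [] := dist r s p q p' q' hrs hr hs; rewrite e eqxx.
have gi : {in S &, injective g}.
  move=> r s; rewrite !inE /g /pk.
  case: pickP => [[p q] /= hr _|//]; case: pickP => [[p' q'] /= hs _ e|//].
  apply/eqP; apply: contraT => hrs.
  by have [] := dist r s p q p' q' hrs hr hs; rewrite e eqxx.
have [s hs] := perm_ext fi.
have [t ht] := perm_ext gi.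
exists s, t, (fun r => U r (s r) (t r)) => r p q.
case: (boolP (r \in S)) => hr.
  move: hr (hs r hr) (ht r hr); rewrite /f /g inE /pk.
  case: pickP => [[p0 q0] /= h0 _ -> ->|//].
  case: (eqVneq p p0) => [->|hp]; case: (eqVneq q q0) => [->|hq];
    rewrite ?mul1r ?mul0r //.
  - apply/eqP; apply: contraT => hne.
    by have [_ e] := single r p0 q0 p0 q h0 hne; rewrite e eqxx in hq.
  - apply/eqP; apply: contraT => hne.
    by have [e _] := single r p0 q0 p q0 h0 hne; rewrite e eqxx in hp.
  - apply/eqP; apply: contraT => hne.
    by have [e _] := single r p0 q0 p q h0 hne; rewrite e eqxx in hp.
move: hr; rewrite inE /pk; case: pickP => [pq _|hN] //= _.
have z a b : U r a b = 0 by move: (hN (a, b)) => /= /negbFE /eqP.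
by rewrite !z mulr0.
Qed.

End Struct.

Unset Implicit Arguments.
Theorem theorem35 (R : rcfType) (n : nat) (T : tensor3 R n) :
  in_OT T <->
  [/\ slice_cond (xslice T), slice_cond (yslice T) & slice_cond (zslice T)].
Proof.
split.
  case=> A [B [C [al [hA hB hC htri]]]].
  have hT : forall i j k, T i j k = \sum_r al r * A r i * B r j * C r k.
    move=> i j k; rewrite -tri_delta htri /diag_trilin.
    by apply: eq_bigr => r _; rewrite !mul_delta.
  split.
  - apply: (@SC_decomp _ _ _ (fun k r => al r * A r k) B C hB hC) => k a b.
    by rewrite mxE hT.
  - apply: (@SC_decomp _ _ _ (fun k r => al r * B r k) A C hA hC) => k a b.
    by rewrite mxE hT; apply: eq_bigr => r _; ring.
  - apply: (@SC_decomp _ _ _ (fun k r => al r * C r k) A B hA hB) => k a b.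
    by rewrite mxE hT; apply: eq_bigr => r _; ring.
case=> hx hy hz.
have [A [hA1 hA2 hAd]] := K_fam hz.
have [B [hB1 hB2 hBd]] := K_fam hx.
have [C [hC1 hC2 hCd]] := K_fam (SC_tr hx).
pose U := rotx A (roty B (rotz C T)).
have xU : forall k, xslice U k = B *m (\sum_i A k i *: xslice T i) *m C^T.
  move=> k; rewrite xs_rotx lin_mx; apply: eq_bigr => i _.
  by rewrite xs_roty xs_rotz mulmxA.
have zU : forall q, zslice U q = A *m (\sum_k C q k *: zslice T k) *m B^T.
  by move=> q; rewrite zs_rotx zs_roty zs_rotz mulmxA.
have PDx : PD (xslice U).
  by apply: (PD_gen xU) => //; rewrite trmxK.
have PDtx : PDt (xslice U).
  apply: (PDt_gen xU) => // i j; have := hCd i j; by rewrite !trmxK.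
have PDz : PD (zslice U).
  by apply: (PD_gen zU) => //; rewrite trmxK.
have SCy : slice_cond (yslice U).
  apply: (@SC_mull _ _ (yslice (roty B (rotz C T))) _ A) => //.
    by move=> k; rewrite ys_rotx.
  apply: (@SC_lin _ _ (yslice (rotz C T)) _ (fun k i => B k i)).
    by move=> k; rewrite ys_roty.
  apply: (@SC_mulr _ _ (yslice T) _ C^T) => //.
    by move=> k; rewrite ys_rotz.
  by rewrite trmxK.
have SCz : slice_cond (zslice U).
  apply: (@SC_mull _ _ (zslice (roty B (rotz C T))) _ A) => //.
    by move=> k; rewrite zs_rotx.
  apply: (@SC_mulr _ _ (zslice (rotz C T)) _ B^T).
  - by move=> k; rewrite zs_roty.
  - by rewrite trmxK.
  apply: (@SC_lin _ _ (zslice T) _ (fun k i => C k i)) => //.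
  by move=> k; rewrite zs_rotz.
have [s [t [al hU]]] := struct PDx PDtx PDz SCy SCz.
have hT : forall i j k, T i j k = \sum_r al r * A r i * B (s r) j * C (t r) k.
  move=> i j k.
  have e : T i j k = \sum_q C q k * (\sum_p B p j * (\sum_r A r i * U r p q)).
    rewrite -(rotz_inv T i j k hC1); apply: eq_bigr => q _; congr (_ * _).
    rewrite -(roty_inv (rotz C T) i j q hB1); apply: eq_bigr => p _; congr (_ * _).
    by rewrite rotx_inv.
  rewrite e.
  transitivity (\sum_q C q k * \sum_r (q == t r)%:R * (al r * A r i * B (s r) j)).
    apply: eq_bigr => q _; congr (_ * _).
    under eq_bigr => p _ do rewrite mulr_sumr.
    rewrite exchange_big; apply: eq_bigr => r _.
    rewrite -[RHS](sum_delta (s r) (fun p => (q == t r)%:R * (al r * A r i * B p j))).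
    by apply: eq_bigr => p _; rewrite hU; ring.
  under eq_bigr => q _ do rewrite mulr_sumr.
  rewrite exchange_big; apply: eq_bigr => r _.
  rewrite -[RHS](sum_delta (t r) (fun q => al r * A r i * B (s r) j * C q k)).
  by apply: eq_bigr => q _; ring.
have orth_perm (M : 'M[R]_n) (w : {perm 'I_n}) : M^T *m M = 1%:M ->
    (\matrix_(r, j) M (w r) j)^T *m (\matrix_(r, j) M (w r) j) = 1%:M.
  move=> hM; rewrite -hM; apply/matrixP => a b; rewrite !mxE.
  rewrite [RHS](reindex_inj (@perm_inj _ w)); apply: eq_bigr => r _.
  by rewrite !mxE.
exists A, (\matrix_(r, j) B (s r) j), (\matrix_(r, j) C (t r) j), al.
split => //; try exact: orth_perm.
apply: tri_formula => i j k; rewrite hT; apply: eq_bigr => r _.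
by rewrite !mxE.
Qed.
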